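(* Let $\mathcal{R}$ be a ring and $(\mathcal{C}^{\bullet},\partial)$ a cochain complex of $\mathcal{R}$-modules with a compatible bigrading $\mathcal{C}^{k}=\bigoplus_{p+q=k}\mathcal{C}^{p,q}$, $\mathcal{C}^{p,q}=\{0\}$ whenever $p<0$ or $q<0$, and $\partial=\partial_{2,-1}+\partial_{1,0}+\partial_{0,1}$ with $\partial_{i,j}(\mathcal{C}^{p,q})\subseteq\mathcal{C}^{p+i,q+j}$. Let $\mathcal{N}:=\ker(\partial_{0,1})\cap\ker(\partial_{2,-1})\subseteq\mathcal{C}$, $\mathcal{N}^{p,q}:=\mathcal{N}\cap\mathcal{C}^{p,q}$ and, for $q\in\mathbb{Z}$, $\mathcal{N}_{q}:=\bigoplus_{p\in\mathbb{Z}}\mathcal{N}^{p-q,q}$ (graded so that $\mathcal{N}^{p-q,q}$ sits in degree $p$). Then the graded $\mathcal{R}$-module $\mathcal{N}$ is a cochain subcomplex of $(\mathcal{C},\partial)$, and for each $q\in\mathbb{Z}$, $\mathcal{N}_{q}$ is also a cochain subcomplex of $(\mathcal{C},\partial)$. *)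

(* Defs.v *)
From mathcomp Require Import all_boot all_order all_algebra.
Set Implicit Arguments. Unset Strict Implicit. Unset Printing Implicit Defensive.
Import Order.TTheory GRing.Theory Num.Theory.
Local Open Scope ring_scope.

(* The whole cochain complex C = (+)_k C^k = (+)_{p,q} C^{p,q} is modelled
   as one R-module V; the bigraded pieces C^{p,q} are given as subsets
   [C p q] of V (indices in int). *)

Section BiComplex.
Variables (R : pzRingType) (V : lmodType R).

Definition submodP (S : V -> Prop) : Prop :=
  S 0 /\ (forall x y, S x -> S y -> S (x + y)) /\ (forall (a : R) x, S x -> S (a *: x)).

Definition totd (d21 d10 d01 : {linear V -> V}) (x : V) : V :=
  d21 x + d10 x + d01 x.

Definition bigraded_complex (C : int -> int -> V -> Prop)
  (d21 d10 d01 : {linear V -> V}) : Prop :=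
  [/\ (forall p q, submodP (C p q)),
      (forall p q, (p < 0 \/ q < 0) -> forall x, C p q x -> x = 0),
      (forall x : V, exists (s : seq (int * int)) (f : int * int -> V),
          (forall i, C i.1 i.2 (f i)) /\ x = \sum_(i <- s) f i),
      (forall (s : seq (int * int)) (f : int * int -> V), uniq s ->
          (forall i, C i.1 i.2 (f i)) -> \sum_(i <- s) f i = 0 ->
          forall i, i \in s -> f i = 0) &
      [/\ (forall p q x, C p q x -> C (p + 2) (q - 1) (d21 x)),
          (forall p q x, C p q x -> C (p + 1) q (d10 x)),
          (forall p q x, C p q x -> C p (q + 1) (d01 x)) &
          (forall x, totd d21 d10 d01 (totd d21 d10 d01 x) = 0)]].

Definition Ctot (C : int -> int -> V -> Prop) (k : int) (x : V) : Prop :=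
  exists (s : seq int) (f : int -> V),
    (forall p, C p (k - p) (f p)) /\ x = \sum_(p <- s) f p.

Definition Nset (d21 d01 : {linear V -> V}) (x : V) : Prop :=
  d01 x = 0 /\ d21 x = 0.

Definition Npq (C : int -> int -> V -> Prop) (d21 d01 : {linear V -> V})
  (p q : int) (x : V) : Prop := Nset d21 d01 x /\ C p q x.

Definition subcomplex (C : int -> int -> V -> Prop)
  (d21 d10 d01 : {linear V -> V}) (S : int -> V -> Prop) : Prop :=
  (forall k, submodP (S k)) /\
  (forall k x, S k x -> Ctot C k x) /\
  (forall k x, S k x -> S (k + 1) (totd d21 d10 d01 x)).

End BiComplex.

(* Main.v *)
Require Import Defs.
From mathcomp Require Import all_boot all_order all_algebra.
From mathcomp Require Import zify.
Import Order.TTheory GRing.Theory Num.Theory.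
Local Open Scope ring_scope.

Lemma natmul_closed (R : pzRingType) (V : lmodType R) (S : V -> Prop) :
  submodP S -> forall x n, S x -> S (x *+ n).
Proof.
move=> [S0 [SD SZ]] x n Sx; elim: n => [|n IH]; first by rewrite mulr0n.
by rewrite mulrS; apply: SD.
Qed.

Lemma sum_closed (R : pzRingType) (V : lmodType R) (S : V -> Prop) :
  submodP S -> forall (I : Type) (s : seq I) (P : pred I) (F : I -> V),
  (forall i, P i -> S (F i)) -> S (\sum_(i <- s | P i) F i).
Proof.
move=> [S0 [SD SZ]] I s P F HF; apply: big_ind => //.
Qed.

Lemma sum_count (R : pzRingType) (V : lmodType R) (I : eqType) (F : I -> V)
  (s t : seq I) : uniq t -> {subset s <= t} ->
  \sum_(i <- s) F i = \sum_(i <- t) F i *+ count_mem i s.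
Proof.
elim: s => [|a s IH] Ut Sst.
  by rewrite big_nil big1 // => i _; rewrite mulr0n.
rewrite big_cons IH //; last by move=> x xs; apply: Sst; rewrite inE xs orbT.
under [RHS]eq_bigr => i _ do rewrite /= mulrnDr.
rewrite big_split /=; congr (_ + _).
have at_ : a \in t by apply: Sst; rewrite inE eqxx.
rewrite (bigD1_seq a) //= eqxx mulr1n big1 ?addr0 // => i /negbTE.
by rewrite eq_sym => ->; rewrite mulr0n.
Qed.

Lemma indep3 (R : pzRingType) (V : lmodType R) (C : int -> int -> V -> Prop)
  (d21 d10 d01 : {linear V -> V}) :
  bigraded_complex C d21 d10 d01 ->
  forall (i j l : int * int) a b c, C i.1 i.2 a -> C j.1 j.2 b -> C l.1 l.2 c ->
  i != j -> i != l -> j != l -> a + b + c = 0 -> [/\ a = 0, b = 0 & c = 0].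
Proof.
move=> [Hsub _ _ Hu _] i j l a b c Ca Cb Cc nij nil njl abc.
pose f := fun k : int * int => if k == i then a else if k == j then b
   else if k == l then c else 0.
have Hf : forall k, C k.1 k.2 (f k).
  move=> k; rewrite /f; case: eqP => [->//|_]; case: eqP => [->//|_].
  case: eqP => [->//|_]; exact: (Hsub _ _).1.
have U : uniq [:: i; j; l] by rewrite /= !inE negb_or nij nil njl.
have fi : f i = a by rewrite /f eqxx.
have fj : f j = b by rewrite /f eq_sym (negbTE nij) eqxx.
have fl : f l = c by rewrite /f eq_sym (negbTE nil) eq_sym (negbTE njl) eqxx.
have S : \sum_(k <- [:: i; j; l]) f k = 0.
  by rewrite !big_cons big_nil fi fj fl addr0 addrA.
have Z := Hu _ _ U Hf S.
split.
- by rewrite -fi; apply: Z; rewrite !inE eqxx.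
- by rewrite -fj; apply: Z; rewrite !inE eqxx orbT.
- by rewrite -fl; apply: Z; rewrite !inE eqxx !orbT.
Qed.
Arguments indep3 {R V C d21 d10 d01}.


Lemma d10_N (R : pzRingType) (V : lmodType R) (C : int -> int -> V -> Prop)
  (d21 d10 d01 : {linear V -> V}) :
  bigraded_complex C d21 d10 d01 ->
  forall x p q, Nset d21 d01 x -> C p q x -> Nset d21 d01 (d10 x).
Proof.
move=> H x p q [n01 n21] Cx.
have H' := H; case: H' => [Hsub _ _ Hu [h21 h10 h01 hdd]].
have := hdd x; rewrite /totd n01 n21 add0r addr0 => E.
have C1 := h10 _ _ _ Cx.
have [] := indep3 H (p + 1 + 2, q - 1) (p + 1 + 1, q)
   (p + 1, q + 1) _ _ _ (h21 _ _ _ C1) (h10 _ _ _ C1) (h01 _ _ _ C1) _ _ _ E.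
- by apply/eqP; case; lia.
- by apply/eqP; case; lia.
- by apply/eqP; case; lia.
by move=> A _ B; split.
Qed.
Arguments d10_N {R V C d21 d10 d01}.


Lemma shift_zero (R : pzRingType) (V : lmodType R) (C : int -> int -> V -> Prop)
  (d21 d10 d01 : {linear V -> V}) :
  bigraded_complex C d21 d10 d01 ->
  forall (d : {linear V -> V}) (a b : int),
  (forall p q x, C p q x -> C (p + a) (q + b) (d x)) ->
  forall (t : seq (int * int)) (G : int * int -> V), uniq t ->
  (forall i, C i.1 i.2 (G i)) -> \sum_(i <- t) d (G i) = 0 ->
  forall i, i \in t -> d (G i) = 0.
Proof.
move=> [_ _ _ Hu _] d a b hd t G Ut HG Hs.
pose sh := fun i : int * int => (i.1 + a, i.2 + b).
have inj_sh : injective sh.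
  by move=> [x1 x2] [y1 y2] [/addIr -> /addIr ->].
have := Hu (map sh t) (fun j => d (G (j.1 - a, j.2 - b))).
rewrite map_inj_uniq // => Z.
have {}Z := Z Ut.
have HC : forall j : int * int, C j.1 j.2 (d (G (j.1 - a, j.2 - b))).
  by move=> j; have := hd _ _ _ (HG (j.1 - a, j.2 - b)); rewrite /= !subrK.
have {}Z := Z HC.
have HS : \sum_(i <- map sh t) d (G (i.1 - a, i.2 - b)) = 0.
  rewrite big_map -[RHS]Hs; apply: eq_bigr => i _; rewrite /= !addrK.
  by case: i.
move=> i it; have := Z HS (sh i) (map_f sh it).
by rewrite /= !addrK; case: i {it}.
Qed.
Arguments shift_zero {R V C d21 d10 d01}.


Lemma N_decomp (R : pzRingType) (V : lmodType R) (C : int -> int -> V -> Prop)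
  (d21 d10 d01 : {linear V -> V}) :
  bigraded_complex C d21 d10 d01 ->
  forall x, Nset d21 d01 x -> exists (t : seq (int * int)) (g : int * int -> V),
  uniq t /\ (forall i, Nset d21 d01 (g i) /\ C i.1 i.2 (g i)) /\ x = \sum_(i <- t) g i.
Proof.
move=> H x [n01 n21].
have H' := H; case: H' => [Hsub _ Hdec Hu [h21 h10 h01 hdd]].
have [s [f [Cf Ex]]] := Hdec x.
pose G := fun i => f i *+ count_mem i s.
have CG : forall i, C i.1 i.2 (G i) by move=> i; apply: natmul_closed.
have Ut : uniq (undup s) by exact: undup_uniq.
have E : x = \sum_(i <- undup s) G i.
  by rewrite Ex; apply: sum_count => // y; rewrite mem_undup.
exists (undup s), G; split => //; split => //.
have G0 : forall i, i \notin undup s -> G i = 0.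
  move=> i; rewrite mem_undup => ni; rewrite /G.
  by have -> : count_mem i s = 0%N by apply/count_memPn.
have h01' : forall p q y, C p q y -> C (p + 0) (q + 1) (d01 y).
  by move=> p q y; rewrite addr0; exact: h01.
move=> i; split => //; case: (boolP (i \in undup s)) => it; last first.
  by rewrite G0 // /Nset !linear0.
split.
- have S0 : \sum_(i <- undup s) d01 (G i) = 0.
  by rewrite -linear_sum -E.
  exact: (shift_zero H _ _ _ h01' _ _ Ut CG S0 _ it).
- have S0 : \sum_(i <- undup s) d21 (G i) = 0.
  by rewrite -linear_sum -E.
  exact: (shift_zero H _ _ _ h21 _ _ Ut CG S0 _ it).
Qed.
Arguments N_decomp {R V C d21 d10 d01}.


Lemma Ctot_sub (R : pzRingType) (V : lmodType R) (C : int -> int -> V -> Prop)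
  (d21 d10 d01 : {linear V -> V}) :
  bigraded_complex C d21 d10 d01 -> forall k, submodP (Ctot C k).
Proof.
move=> [Hsub _ _ _ _] k; split; [|split].
- exists [::], (fun _ => 0); split; first by move=> p; exact: (Hsub _ _).1.
  by rewrite big_nil.
- move=> x y [s1 [f1 [C1 ->]]] [s2 [f2 [C2 ->]]].
  exists (undup (s1 ++ s2)),
    (fun p => f1 p *+ count_mem p s1 + f2 p *+ count_mem p s2); split.
    move=> p; apply: (Hsub _ _).2.1; exact: natmul_closed.
  have U := undup_uniq (s1 ++ s2).
  have S1 : {subset s1 <= undup (s1 ++ s2)}.
    by move=> z zs; rewrite mem_undup mem_cat zs.
  have S2 : {subset s2 <= undup (s1 ++ s2)}.
    by move=> z zs; rewrite mem_undup mem_cat zs orbT.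
  by rewrite big_split /= -(@sum_count _ _ _ f1 _ _ U S1) -(@sum_count _ _ _ f2 _ _ U S2).
- move=> a x [s1 [f1 [C1 ->]]]; exists s1, (fun p => a *: f1 p); split.
    by move=> p; apply: (Hsub _ _).2.2.
  by rewrite scaler_sumr.
Qed.
Arguments Ctot_sub {R V C d21 d10 d01}.


Lemma N_sub (R : pzRingType) (V : lmodType R) (d21 d01 : {linear V -> V}) :
  submodP (Nset d21 d01).
Proof.
split; [|split].
- by rewrite /Nset !linear0.
- by move=> x y [a1 a2] [b1 b2]; rewrite /Nset !linearD a1 a2 b1 b2 addr0.
- by move=> a x [a1 a2]; rewrite /Nset !linearZ /= a1 a2 scaler0.
Qed.

Theorem lemma3p1 (R : pzRingType) (V : lmodType R)
  (C : int -> int -> V -> Prop) (d21 d10 d01 : {linear V -> V}) :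
  bigraded_complex C d21 d10 d01 ->
  (* N is a graded submodule: N = (+)_k (N /\ C^k) ... *)
  [/\ submodP (Nset d21 d01),
      (forall x, Nset d21 d01 x -> exists (s : seq int) (f : int -> V),
         (forall k, Nset d21 d01 (f k) /\ Ctot C k (f k)) /\ x = \sum_(k <- s) f k),
      (* ... and a cochain subcomplex of (C, d) *)
      subcomplex C d21 d10 d01 (fun k x => Nset d21 d01 x /\ Ctot C k x) &
      (* for each q, N_q = (+)_p N^{p-q,q} (degree p) is a cochain subcomplex *)
      forall q : int, subcomplex C d21 d10 d01 (fun p => Npq C d21 d01 (p - q) q)].
Proof.
move=> H.
have H' := H; case: H' => [Hsub _ Hdec Hu [h21 h10 h01 hdd]].
have NS := @N_sub _ _ d21 d01.
have CS := Ctot_sub H.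
have conj_sub : forall S1 S2 : V -> Prop, submodP S1 -> submodP S2 ->
    submodP (fun x => S1 x /\ S2 x).
  move=> S1 S2 [a0 [aD aZ]] [b0 [bD bZ]]; split; [|split] => //.
  - by move=> x y [? ?] [? ?]; split; [apply: aD | apply: bD].
  - by move=> a x [? ?]; split; [apply: aZ | apply: bZ].
have totdN : forall x, Nset d21 d01 x -> totd d21 d10 d01 x = d10 x.
  by move=> x [n01 n21]; rewrite /totd n01 n21 add0r addr0.
split => //.
- move=> x /(N_decomp H x) [t [g [Ut [Hg ->]]]].
  pose F := fun k => \sum_(i <- t | i.1 + i.2 == k) g i.
  exists (undup (map (fun i : int * int => i.1 + i.2) t)), F; split.
    move=> k; split; first by apply: sum_closed => // i _; exact: (Hg i).1.
    exists (map fst [seq i <- t | i.1 + i.2 == k]), (fun p => g (p, k - p)).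
    split; first by move=> p; exact: (Hg (p, k - p)).2.
    rewrite big_map /F -[LHS]big_filter; apply: eq_big_seq => i.
    rewrite mem_filter => /andP [/eqP <- _].
    have -> : i.1 + i.2 - i.1 = i.2 by lia.
    by case: i.
  rewrite /F (exchange_big_dep xpredT) //=; apply: eq_big_seq => i it.
  rewrite big_mkcond (bigD1_seq (i.1 + i.2)) ?undup_uniq //; last first.
    by rewrite mem_undup; apply/mapP; exists i.
  rewrite /= eqxx big1 ?addr0 // => k /negbTE.
  by rewrite eq_sym => ->.
- split; first by move=> k; apply: conj_sub.
  split; first by move=> k x [].
  move=> k x [Nx [s [f [Cf Ex]]]]; rewrite totdN //; split.
    have [t [g [Ut [Hg Ex']]]] := N_decomp H x Nx.
    rewrite Ex' linear_sum; apply: sum_closed => // i _.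
    exact: (d10_N H _ _ _ (Hg i).1 (Hg i).2).
  exists (map (fun p => p + 1) s), (fun p => d10 (f (p - 1))); split.
    move=> p; have := h10 _ _ _ (Cf (p - 1)).
    have -> : k - (p - 1) = k + 1 - p by lia.
    by rewrite subrK.
  rewrite Ex linear_sum big_map; apply: eq_bigr => p _; by rewrite addrK.
- move=> q; split; first by move=> k; apply: conj_sub.
  split.
    move=> p x [Nx Cx]; exists [:: p - q], (fun r => if r == p - q then x else 0).
    split; last by rewrite big_cons big_nil eqxx addr0.
    move=> r; case: eqP => [->|_]; last exact: (Hsub _ _).1.
    have -> : p - (p - q) = q by lia.
    done.
  move=> p x [Nx Cx]; rewrite totdN //; split.
    exact: (d10_N H _ _ _ Nx Cx).
  have := h10 _ _ _ Cx.
  have -> : p - q + 1 = p + 1 - q by lia.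
  done.
Qed.
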